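(* Let $a<b<c$ be elements of $\mathcal{C}_n$ and let $\triangle=\triangle^{(n)}\{a,b,c\}$. Let $L_{par}=\{\alpha\in\triangle:\ \alpha(a)=a,\ \alpha(b)=\alpha(c)=b\}$ and $R_{par}=\{\alpha\in\triangle:\ \alpha(a)=\alpha(b)=b,\ \alpha(c)=c\}$. Then $L_{par}$ and $R_{par}$ are subsemirings of $\triangle$.
   Context: $\mathcal{C}_n=\{0,1,\dots,n-1\}$ with its usual order; $\widehat{\mathcal{E}}_{\mathcal{C}_n}$ is the set of all order-preserving maps $\mathcal{C}_n\to\mathcal{C}_n$ (not required to fix $0$), a semiring with $(\alpha+\beta)(x)=\max(\alpha(x),\beta(x))$ and $(\alpha\cdot\beta)(x)=\beta(\alpha(x))$. The triangle $\triangle^{(n)}\{a,b,c\}$ is the set of all $\alpha\in\widehat{\mathcal{E}}_{\mathcal{C}_n}$ with image in $\{a,b,c\}$. In the paper, $L_{par}$ is the set of ''left elements'' of the layers $\{\alpha\in\triangle: |\alpha^{-1}(a)|=k\}$, $a+1\le k\le b$, and $R_{par}$ the set of ''right elements'' of the layers $\{\alpha\in\triangle: |\alpha^{-1}(c)|=k\}$, $n-c\le k\le n-b-1$; these coincide with the sets described in the claim. A subsemiring is a nonempty subset closed under $+$ and $\cdot$. *)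

(* Defs.v *)
(* C_n = 'I_n with its usual order. *)
From mathcomp Require Import all_boot all_order.
Set Implicit Arguments. Unset Strict Implicit. Unset Printing Implicit Defensive.

(* An element of \hat E_{C_n}: an order-preserving map C_n -> C_n (0 need not be fixed). *)
Definition order_preserving (n : nat) (f : 'I_n -> 'I_n) : Prop :=
  forall x y : 'I_n, x <= y -> f x <= f y.

Definition splus (n : nat) (f g : 'I_n -> 'I_n) : 'I_n -> 'I_n :=
  fun x => if f x <= g x then g x else f x.

Definition smul (n : nat) (f g : 'I_n -> 'I_n) : 'I_n -> 'I_n :=
  fun x => g (f x).

Definition triangle (n : nat) (a b c : 'I_n) (f : 'I_n -> 'I_n) : Prop :=
  order_preserving f /\ forall x, f x = a \/ f x = b \/ f x = c.

Definition subsemiring_of (n : nat) (T S : ('I_n -> 'I_n) -> Prop) : Prop :=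
  (forall f, S f -> T f) /\
  (exists f, S f) /\
  (forall f g, S f -> S g -> S (splus f g)) /\
  (forall f g, S f -> S g -> S (smul f g)).

Definition L_par (n : nat) (a b c : 'I_n) (f : 'I_n -> 'I_n) : Prop :=
  triangle a b c f /\ f a = a /\ f b = b /\ f c = b.

Definition R_par (n : nat) (a b c : 'I_n) (f : 'I_n -> 'I_n) : Prop :=
  triangle a b c f /\ f a = b /\ f b = b /\ f c = c.

(* Main.v *)
Require Import Defs.
From mathcomp Require Import all_boot all_order.
From mathcomp Require Import zify.

Lemma tri_plus n (a b c : 'I_n) f g :
  triangle a b c f -> triangle a b c g -> triangle a b c (splus f g).
Proof.
move=> [hf vf] [hg vg]; split.
  move=> x y hxy; rewrite /splus.
  have h1 := hf x y hxy; have h2 := hg x y hxy.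
  case: ifP => e1; case: ifP => e2; move: e1 e2 h1 h2;
    move: (nat_of_ord (f x)) (nat_of_ord (g x)) (nat_of_ord (f y)) (nat_of_ord (g y)); lia.
by move=> x; rewrite /splus; case: ifP.
Qed.

Lemma tri_mul n (a b c : 'I_n) f g :
  triangle a b c f -> triangle a b c g -> triangle a b c (smul f g).
Proof.
move=> [hf vf] [hg vg]; split.
  by move=> x y hxy; rewrite /smul; apply: hg; apply: hf.
by move=> x; rewrite /smul.
Qed.

Lemma splus_eq n (f g : 'I_n -> 'I_n) x v : f x = v -> g x = v -> splus f g x = v.
Proof. by rewrite /splus => -> ->; rewrite leqnn. Qed.

Theorem proposition39 (n : nat) (a b c : 'I_n) (hab : a < b) (hbc : b < c) :
  subsemiring_of (triangle a b c) (L_par a b c) /\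
  subsemiring_of (triangle a b c) (R_par a b c).
Proof.
split.
  split; first by move=> f [].
  split; [| split].
- exists (fun x : 'I_n => if x <= a then a else b).
  split; [split|].
  + move=> x y hxy; case: ifP => ex; case: ifP => ey //.
    * by apply: ltnW.
    * by rewrite (leq_trans hxy ey) in ex.
  + by move=> x; case: ifP; auto.
  + rewrite leqnn; split => //; split.
    * by rewrite leqNgt hab.
    * by rewrite leqNgt (ltn_trans hab hbc).
- move=> f g [tf [fa [fb fc]]] [tg [ga [gb gc]]]; split; first exact: tri_plus.
  by split; [|split]; apply: splus_eq.
- move=> f g [tf [fa [fb fc]]] [tg [ga [gb gc]]]; split; first exact: tri_mul.
  by rewrite /smul fa fb fc ga gb.
split; first by move=> f [].
split; [| split].
- exists (fun x : 'I_n => if x < c then b else c).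
  split; [split|].
  + move=> x y hxy; case: ifP => ex; case: ifP => ey //.
    * by apply: ltnW.
    * by rewrite (leq_ltn_trans hxy ey) in ex.
  + by move=> x; case: ifP; auto.
  + by rewrite (ltn_trans hab hbc) hbc ltnn.
- move=> f g [tf [fa [fb fc]]] [tg [ga [gb gc]]]; split; first exact: tri_plus.
  by split; [|split]; apply: splus_eq.
- move=> f g [tf [fa [fb fc]]] [tg [ga [gb gc]]]; split; first exact: tri_mul.
  by rewrite /smul fa fb fc gb gc.
Qed.
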